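(* Let $G$ be a finite digraph which is a directed cycle, let $\varphi^L,\varphi^U:G\to[0,1]$ with $\varphi^L<\varphi^U$, and let $\varepsilon>0$. Then there exist a digraph $\tilde G$ which is a directed cycle, a surjective edge-preserving homomorphism $\Psi:\tilde G\to G$, and $\tilde\varphi^L,\tilde\varphi^U:\tilde G\to[0,1]$ such that: (a) if $\tilde g\in\tilde G$ and $\Psi(\tilde g)=g$, then $\varphi^L(g)\le\tilde\varphi^L(\tilde g)<\tilde\varphi^U(\tilde g)\le\varphi^U(g)$; (b) for every $g\in G$ there is $\tilde g\in\tilde G$ with $\Psi(\tilde g)=g$, $\tilde\varphi^L(\tilde g)=\varphi^L(g)$ and $\tilde\varphi^U(\tilde g)=\varphi^U(g)$; (c) for every $g\in G$ and all $a<b$ with $\varphi^L(g)\le a<b\le\varphi^U(g)$ there is $\tilde g\in\tilde G$ with $\Psi(\tilde g)=g$, $|a-\tilde\varphi^L(\tilde g)|<\varepsilon$ and $|b-\tilde\varphi^U(\tilde g)|<\varepsilon$; (d) whenever $\overrightarrow{\tilde g_1\tilde g_2}$ is an edge of $\tilde G$ with $\Psi(\tilde g_i)=g_i$, the increasing affine map $\alpha_1$ of $[\varphi^L(g_1),\varphi^U(g_1)]$ onto $[\varphi^L(g_2),\varphi^U(g_2)]$ and the increasing affine map $\alpha_2$ of $[\tilde\varphi^L(\tilde g_1),\tilde\varphi^U(\tilde g_1)]$ onto $[\tilde\varphi^L(\tilde g_2),\tilde\varphi^U(\tilde g_2)]$ are $\varepsilon$-close on their common domain, and $\alpha_1^{-1}$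 and $\alpha_2^{-1}$ are $\varepsilon$-close on their common domain. Moreover, there exists $m_0\in\mathbb{N}$ such that for every $m\ge m_0$ the digraph $\tilde G$ can be chosen with $|\tilde G|=m|G|$.
   Context: A digraph is a directed cycle if its vertices can be enumerated $c_1,\dots,c_k$ so that its edges are exactly $\overrightarrow{c_ic_{i+1}}$ ($1\le i<k$) and $\overrightarrow{c_kc_1}$. An edge-preserving homomorphism maps each edge $\overrightarrow{uv}$ to an edge $\overrightarrow{\Psi(u)\Psi(v)}$. *)

(* Defs.v *)
From HB Require Import structures.
From mathcomp Require Import all_boot all_order all_algebra.
From mathcomp Require Import reals.
Set Implicit Arguments. Unset Strict Implicit. Unset Printing Implicit Defensive.
Import Order.TTheory GRing.Theory Num.Theory.
Local Open Scope ring_scope.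

Definition is_dcycle (T : finType) (e : rel T) : Prop :=
  exists k : nat, exists c : 'I_k -> T,
    (0 < k)%N /\ bijective c /\
    forall i j : 'I_k, e (c i) (c j) = (val j == (val i).+1 %% k)%N.

Definition edge_hom (T' T : finType) (e' : rel T') (e : rel T) (f : T' -> T) :=
  forall x y, e' x y -> e (f x) (f y).

Definition affmap (R : realType) (l1 u1 l2 u2 : R) (x : R) : R :=
  l2 + (x - l1) * (u2 - l2) / (u1 - l1).

Definition close_on (R : realType) (eps : R) (f g : R -> R) (l1 u1 l2 u2 : R) :=
  forall x, l1 <= x <= u1 -> l2 <= x <= u2 -> `|f x - g x| < eps.

Definition in01 (R : realType) (T : Type) (phi : T -> R) :=
  forall t, 0 <= phi t <= 1.

Definition lift_props (R : realType) (T : finType) (e : rel T)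
  (phiL phiU : T -> R) (eps : R)
  (T' : finType) (e' : rel T') (Psi : T' -> T) (phiL' phiU' : T' -> R) : Prop :=
  (is_dcycle e' /\ (forall g : T, exists t : T', Psi t = g) /\ edge_hom e' e Psi /\ in01 phiL' /\ in01 phiU' /\
   (forall t : T', phiL (Psi t) <= phiL' t /\ phiL' t < phiU' t /\
                   phiU' t <= phiU (Psi t)) /\
   (forall g : T, exists t : T', Psi t = g /\ phiL' t = phiL g /\ phiU' t = phiU g) /\
   (forall (g : T) (a b : R), phiL g <= a -> a < b -> b <= phiU g ->
      exists t : T', Psi t = g /\ `|a - phiL' t| < eps /\ `|b - phiU' t| < eps)
   /\
   (forall t1 t2 : T', e' t1 t2 ->
      let g1 := Psi t1 in let g2 := Psi t2 in
      close_on eps (affmap (phiL g1) (phiU g1) (phiL g2) (phiU g2))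
                   (affmap (phiL' t1) (phiU' t1) (phiL' t2) (phiU' t2))
                   (phiL g1) (phiU g1) (phiL' t1) (phiU' t1) /\
      close_on eps (affmap (phiL g2) (phiU g2) (phiL g1) (phiU g1))
                   (affmap (phiL' t2) (phiU' t2) (phiL' t1) (phiU' t1))
                   (phiL g2) (phiU g2) (phiL' t2) (phiU' t2))).

(* Main.v *)
Require Import Defs.
From HB Require Import structures.
From mathcomp Require Import all_boot all_order all_algebra.
From mathcomp Require Import reals.
From mathcomp Require Import ring lra zify.
Set Implicit Arguments. Unset Strict Implicit. Unset Printing Implicit Defensive.
Import Order.TTheory GRing.Theory Num.Theory.
Section Seqn.
Local Open Scope nat_scope.
Variable n : nat.
Hypothesis n0 : (0 < n)%N.
Definition MM := ((2*n)*(2*n))%N.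
Definition Ai r := ((r %% MM) %/ (2*n))%N.
Definition Bi r := ((r %% MM) %% (2*n))%N.
Definition tri A := minn A (2*n - A).
Definition SS A := minn n.-1 (tri A).
Definition TT A B := maxn (SS A).+1 (n - tri B).
Definition sS r := SS (Ai r).
Definition sT r := TT (Ai r) (Bi r).

Lemma sS_lt_sT r : (sS r < sT r)%N.
Proof. by rewrite /sS /sT /TT leq_maxl. Qed.
Lemma sT_le r : (sT r <= n)%N.
Proof.
rewrite /sT /TT geq_max leq_subr andbT /SS.
have h : (minn n.-1 (tri (Ai r)) <= n.-1)%N by exact: geq_minl.
by rewrite -(prednK n0) ltnS.
Qed.

Lemma divmodE x d Q Rr : (0 < d)%N -> x = (Q * d + Rr)%N -> (Rr < d)%N ->
  x %/ d = Q /\ x %% d = Rr.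
Proof.
move=> d0 -> lt; rewrite divnMDl // divn_small // addn0; split=> //.
by rewrite modnMDl modn_small.
Qed.

Lemma n2 : (0 < 2 * n)%N. Proof. by rewrite muln_gt0. Qed.

Lemma MM0 : (0 < MM)%N. Proof. by rewrite /MM muln_gt0 n2. Qed.

Lemma AiBi r : (Ai r < 2*n)%N /\ (Bi r < 2*n)%N /\ r %% MM = (Ai r * (2*n) + Bi r)%N.
Proof.
have q0 : (r %% MM < MM)%N by rewrite ltn_pmod // MM0.
rewrite /Ai /Bi; split; last split.
- by rewrite ltn_divLR; [exact: q0| exact: n2].
- by rewrite ltn_pmod // n2.
- exact: divn_eq.
Qed.

Lemma step r :
  let A := Ai r in let B := Bi r in
  (Ai r.+1, Bi r.+1) = if (B.+1 < 2*n)%N then (A, B.+1)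
     else if (A.+1 < 2*n)%N then (A.+1, 0%N) else (0%N, 0%N).
Proof.
move=> A B; have [hA [hB hq]] := AiBi r.
have e1 : r.+1 %% MM = (r %% MM).+1 %% MM by rewrite -addn1 -modnDml addn1.
rewrite /Ai /Bi e1 hq -/A -/B.
case: ifP => h1.
  have hlt : ((A * (2*n) + B).+1 < MM)%N.
    have : (A.+1 * (2*n) <= MM)%N by rewrite /MM leq_mul2r hA orbT.
    by rewrite mulSn; lia.
  rewrite (modn_small hlt).
  have [-> ->] := @divmodE (A * (2 * n) + B).+1 (2*n) A B.+1 n2 (esym (addnS _ _)) h1.
  by [].
have hB1 : (A * (2*n) + B).+1 = (A.+1 * (2*n))%N by move/negbT: h1; rewrite mulSn; lia.
rewrite hB1.
case: ifP => h2.
  have hlt : (A.+1 * (2*n) < MM)%N by rewrite /MM ltn_pmul2r // n2.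
  rewrite (modn_small hlt).
  have [-> ->] := @divmodE (A.+1 * (2 * n)) (2*n) A.+1 0 n2 (esym (addn0 _)) n2.
  by [].
have -> : (A.+1 * (2*n))%N = MM.
  by rewrite /MM; move/negbT: h2; rewrite -leqNgt => h2; congr (_ * _); apply/eqP; rewrite eqn_leq h2 hA.
rewrite modnn div0n mod0n; by [].
Qed.

Definition close1 a b := (a <= b.+1)%N && (b <= a.+1)%N.
Lemma close1_refl a : close1 a a. Proof. by apply/andP; split; apply: leqnSn. Qed.
Lemma close1_S a : close1 a a.+1. Proof. by apply/andP; split; [apply: leqW; apply: leqnSn | apply: leqnn]. Qed.
Lemma close1_sym a b : close1 a b -> close1 b a.
Proof. by rewrite /close1 andbC. Qed.
Lemma close1_min a b c d : close1 a b -> close1 c d -> close1 (minn a c) (minn b d).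
Proof. rewrite /close1 /minn => /andP[h1 h2] /andP[h3 h4]; do 2 case: ltnP => ? //; apply/andP; split; lia. Qed.
Lemma close1_max a b c d : close1 a b -> close1 c d -> close1 (maxn a c) (maxn b d).
Proof. rewrite /close1 /maxn => /andP[h1 h2] /andP[h3 h4]; do 2 case: ltnP => ? //; apply/andP; split; lia. Qed.
Lemma close1_sub m a b : close1 a b -> close1 (m - a) (m - b).
Proof. rewrite /close1 => /andP[h1 h2]; apply/andP; split; lia. Qed.
Lemma close1_succ a b : close1 a b -> close1 a.+1 b.+1.
Proof. by []. Qed.

Lemma tri_step B : (B.+1 < 2 * n)%N -> close1 (tri B) (tri B.+1).
Proof.
move=> h; apply: close1_min; first exact: close1_S.
apply: close1_sym; rewrite /close1; apply/andP; split; lia.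
Qed.

Lemma tri_wrap B : (B < 2 * n)%N -> ~~ (B.+1 < 2 * n)%N -> close1 (tri B) (tri 0).
Proof.
move=> h1 h2; have eB : B = (2 * n).-1 by lia.
have e1 : tri B = 1%N.
  rewrite /tri eB; have -> : (2 * n - (2 * n).-1 = 1)%N by lia.
  by apply/minn_idPr; lia.
by rewrite e1 /tri min0n.
Qed.

Lemma SS_close A A' : close1 (tri A) (tri A') -> close1 (SS A) (SS A').
Proof. by move=> h; apply: close1_min => //; exact: close1_refl. Qed.

Lemma TT_close A A' B B' : close1 (tri A) (tri A') -> close1 (tri B) (tri B') ->
  close1 (TT A B) (TT A' B').
Proof.
move=> h1 h2; apply: close1_max; first exact: close1_succ (SS_close h1).
exact: close1_sub.
Qed.

Lemma step_close r : close1 (sS r) (sS r.+1) /\ close1 (sT r) (sT r.+1).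
Proof.
have [hA [hB _]] := AiBi r.
have := step r; rewrite /sS /sT.
case: ifP => h1.
  case=> -> ->; split; [exact/SS_close/close1_refl | apply: TT_close; [exact: close1_refl | exact: tri_step]].
have hw := tri_wrap hB (negbT h1).
case: ifP => h2.
  case=> -> ->; split; [exact/SS_close/tri_step | exact: TT_close (tri_step h2) hw].
case=> -> ->; split; [exact/SS_close/(tri_wrap hA (negbT h2)) | exact: TT_close (tri_wrap hA (negbT h2)) hw].
Qed.

Lemma step_ineq r : [/\ (sS r <= (sS r.+1).+1)%N, (sS r.+1 <= (sS r).+1)%N,
   (sT r <= (sT r.+1).+1)%N & (sT r.+1 <= (sT r).+1)%N].
Proof.
by have [/andP[? ?] /andP[? ?]] := step_close r; split.
Qed.

Lemma sS0 : sS 0 = 0%N /\ sT 0 = n.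
Proof.
rewrite /sS /sT /TT /SS /Ai /Bi mod0n div0n mod0n /tri !min0n minn0 subn0.
by split=> //; apply/maxn_idPr.
Qed.

Lemma sSM : sS MM = sS 0 /\ sT MM = sT 0.
Proof. by rewrite /sS /sT /Ai /Bi modnn mod0n. Qed.

Lemma dense I J : (I < n)%N -> (J <= n)%N ->
  exists r, (r < MM)%N /\ sS r = I /\ sT r = maxn I.+1 J.
Proof.
move=> hI hJ; exists (I * (2*n) + (n - J))%N.
have hlt : (I * (2*n) + (n - J) < MM)%N.
  have : (I.+1 * (2*n) <= MM)%N by rewrite /MM leq_mul2r; apply/orP; right; lia.
  by rewrite mulSn; lia.
split=> //.
have [hA hB] := @divmodE (I * (2*n) + (n - J)) (2*n) I (n-J) n2 erefl ltac:(lia).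
have t1 : tri I = I by apply/minn_idPl; lia.
have t2 : tri (n - J) = (n - J)%N by apply/minn_idPl; lia.
have t3 : minn n.-1 I = I by apply/minn_idPr; lia.
rewrite /sS /sT /Ai /Bi (modn_small hlt) hA hB /TT /SS t1 t2 t3 subKn //.
Qed.
End Seqn.
Local Open Scope ring_scope.
Lemma aff_close (R : realType) (eps L1 U1 L2 U2 s1 t1 s2 t2 : R) :
  L1 < U1 -> L2 < U2 -> U2 - L2 <= 1 -> s1 < t1 -> s2 < t2 ->
  `|s1 - s2| < eps -> `|t1 - t2| < eps ->
  close_on eps (affmap L1 U1 L2 U2)
    (affmap (L1 + s1 * (U1 - L1)) (L1 + t1 * (U1 - L1))
            (L2 + s2 * (U2 - L2)) (L2 + t2 * (U2 - L2)))
    L1 U1 (L1 + s1 * (U1 - L1)) (L1 + t1 * (U1 - L1)).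
Proof.
move=> hL1 hL2 hd2 hs ht ha hb x _ /andP[hx1 hx2].
rewrite /affmap.
set d1 := U1 - L1 in hx1 hx2 *; set d2 := U2 - L2 in hd2 *.
have d1p : 0 < d1 by rewrite /d1 subr_gt0.
have d2p : 0 < d2 by rewrite /d2 subr_gt0.
have tsp : 0 < t1 - s1 by rewrite subr_gt0.
set lam := (x - (L1 + s1 * d1)) / ((t1 - s1) * d1).
have den : 0 < (t1 - s1) * d1 by rewrite mulr_gt0.
have lam0 : 0 <= lam by apply: divr_ge0; [rewrite subr_ge0 | exact: ltW].
have lam1 : lam <= 1.
  by rewrite /lam ler_pdivrMr // mul1r mulrBl; lra.
have eq : L2 + (x - L1) * d2 / d1 -
   (L2 + s2 * d2 + (x - (L1 + s1 * d1)) * (L2 + t2 * d2 - (L2 + s2 * d2)) /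
     (L1 + t1 * d1 - (L1 + s1 * d1)))
   = - (d2 * ((1 - lam) * (s2 - s1) + lam * (t2 - t1))).
  rewrite /lam; field.
  have h3 : L1 + t1*d1 - (L1+s1*d1) = (t1-s1)*d1 by ring.
  by rewrite h3 !gt_eqF.
rewrite eq normrN; clearbody lam.
move: ha hb; rewrite !ltr_norml => /andP[ha1 ha2] /andP[hb1 hb2].
set z := (1 - lam) * (s2 - s1) + lam * (t2 - t1).
set m := Num.max `|s2 - s1| `|t2 - t1|.
have hm : m < eps by rewrite /m gt_max -!(distrC s1) -!(distrC t1) !ltr_norml; apply/andP; split; apply/andP; split; lra.
have ham : -m <= s2 - s1 <= m by rewrite -ler_norml /m le_max lexx.
have hbm : -m <= t2 - t1 <= m by rewrite -ler_norml /m le_max lexx orbT.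
move/andP: ham => [ha3 ha4]; move/andP: hbm => [hb3 hb4].
have hz1 : -m <= z by rewrite /z; nra.
have hz2 : z <= m by rewrite /z; nra.
have hz : -eps < z < eps by apply/andP; split; lra.
have hz' : `|z| < eps by rewrite ltr_norml.
rewrite -ltr_norml normrM (gtr0_norm d2p); apply: le_lt_trans hz'.
by apply: ler_piMl.
Qed.

Lemma natdiv_bounds (R : realType) (a b n : nat) : (a < b)%N -> (b <= n)%N -> (0 < n)%N ->
  0 <= a%:R / n%:R :> R /\ a%:R / n%:R < b%:R / n%:R :> R /\ b%:R / n%:R <= 1 :> R.
Proof.
move=> hab hbn n0; have np : 0 < n%:R :> R by rewrite ltr0n.
split; first by rewrite divr_ge0.
split; first by rewrite ltr_pM2r ?invr_gt0 // ltr_nat.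
by rewrite ler_pdivrMr // mul1r ler_nat.
Qed.

Lemma lift_bounds (R : realType) (L U s t : R) : L < U -> 0 <= s -> s < t -> t <= 1 ->
  L <= L + s * (U - L) /\ L + s * (U - L) < L + t * (U - L) /\ L + t * (U - L) <= U.
Proof. move=> hLU hs hst ht; split; [nra | split; nra]. Qed.

Lemma close_nat (R : realType) (eps : R) (a b n : nat) : (0 < n)%N -> n%:R^-1 < eps ->
  (a <= b.+1)%N -> (b <= a.+1)%N -> `|a%:R / n%:R - b%:R / n%:R| < eps.
Proof.
move=> n0 hn h1 h2.
have np : 0 < n%:R :> R by rewrite ltr0n.
rewrite -mulrBl normrM (ger0_norm (_ : 0 <= n%:R^-1)) ?invr_ge0 ?ler0n //.
have h : `|a%:R - b%:R| <= 1 :> R.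
  rewrite ler_norml; move: h1 h2; rewrite -!(ler_nat R) -!natr1 => h1 h2.
  apply/andP; split; lra.
apply: le_lt_trans hn; rewrite -[X in _ <= X]mul1r ler_pM2r ?invr_gt0 //.
Qed.

Lemma fin_bound (R : realType) (eps d y : R) (n : nat) : 0 < d -> d <= 1 -> (0 < n)%N ->
  `|y| <= 1 -> n%:R^-1 < eps -> `|d / n%:R * y| < eps.
Proof.
move=> d0 d1 n0 hy hn.
have np : 0 < n%:R :> R by rewrite ltr0n.
have hA : 0 <= d / n%:R <= n%:R^-1.
  by apply/andP; split; [rewrite divr_ge0 // ltW | rewrite ler_pdivrMr // mulVf ?gt_eqF].
rewrite normrM (ger0_norm (ltW _)) ?divr_gt0 //.
apply: le_lt_trans hn; move/andP: hA => [hA1 hA2]; have := normr_ge0 y; nra.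
Qed.
Definition wi (n k j : nat) := minn (j %/ k) (MM n).

Lemma wcases (n k N x : nat) : (0 < k)%N -> (MM n < N)%N -> (x < N * k)%N ->
  let y := (x.+1 %% (N * k))%N in
  wi n k y = wi n k x \/ wi n k y = (wi n k x).+1 \/ (wi n k x = MM n /\ wi n k y = 0%N).
Proof.
move=> k0 hN hx y.
have hxe := div.divn_eq x k; have hr : (x %% k < k)%N by rewrite ltn_pmod.
move: (x %/ k)%N (x %% k)%N hxe hr => Q Rm hxe hr.
have hQ : (x %/ k)%N = Q by have [] := divmodE k0 hxe hr.
rewrite /y /wi hQ.
case: (ltnP x.+1 (N * k)) => h1.
  rewrite (modn_small h1).
  case: (ltnP Rm.+1 k) => h2.
    have [-> _] := @divmodE x.+1 k Q Rm.+1 k0 ltac:(lia) h2; by left.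
  have [-> _] := @divmodE x.+1 k Q.+1 0 k0 ltac:(rewrite mulSn; lia) k0.
  rewrite ?addn0; case: (ltnP Q (MM n)) => h3.
    right; left; lia.
  left; lia.
have h1' : x.+1 = (N * k)%N by lia.
rewrite h1' modnn div0n min0n; right; right; split=> //.
clear y; case: N hN hx h1' h1 => [|N'] hN hx h1' h1; first by [].
have [hq _] := @divmodE x k N' k.-1 k0 ltac:(move: h1'; rewrite mulSn; lia) ltac:(lia).
have eQ : Q = N' by rewrite -hQ hq.
rewrite eQ; lia.
Qed.

Lemma wstep (n k N x : nat) : (0 < n)%N -> (0 < k)%N -> (MM n < N)%N -> (x < N * k)%N ->
  let y := (x.+1 %% (N * k))%N in
  [/\ (sS n (wi n k y) <= (sS n (wi n k x)).+1)%N, (sS n (wi n k x) <= (sS n (wi n k y)).+1)%N,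
      (sT n (wi n k y) <= (sT n (wi n k x)).+1)%N & (sT n (wi n k x) <= (sT n (wi n k y)).+1)%N].
Proof.
move=> n0 k0 hN hx y.
case: (wcases k0 hN hx) => [->|[->|[-> ->]]].
- by split; apply: leqnSn.
- by have [? ? ? ?] := step_ineq n0 (wi n k x); split.
- by have [-> ->] := sSM n; split; apply: leqnSn.
Qed.

Lemma idx_lt (r k N i : nat) : (r < N)%N -> (i < k)%N -> (r * k + i < N * k)%N.
Proof.
move=> h1 h2; have : (r.+1 * k <= N * k)%N by rewrite leq_mul2r h1 orbT.
by rewrite mulSn; lia.
Qed.

Lemma construct (R : realType) (T : finType) (e : rel T) (phiL phiU : T -> R) (eps : R)
  (k : nat) (c : 'I_k -> T) (cinv : T -> 'I_k) (k0 : (0 < k)%N)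
  (cK : cancel c cinv) (Kc : cancel cinv c)
  (he : forall i j : 'I_k, e (c i) (c j) = (val j == (val i).+1 %% k)%N)
  (hL : in01 phiL) (hU : in01 phiU) (hLU : forall g, phiL g < phiU g)
  (n : nat) (n0 : (0 < n)%N) (hn : n%:R^-1 < eps) (N : nat) (hN : (MM n < N)%N) :
  exists (T' : finType) (e' : rel T') (Psi : T' -> T) (phiL' phiU' : T' -> R),
       lift_props e phiL phiU eps e' Psi phiL' phiU' /\ #|T'| = (N * #|T|)%N.
Proof.
have Nk0 : (0 < N * k)%N by rewrite muln_gt0 k0 andbT; lia.
pose e' := [rel x y : 'I_(N * k) | val y == (val x).+1 %% (N * k)]%N.
pose idx (j : 'I_(N * k)) : 'I_k := Ordinal (ltn_pmod j k0).
pose Psi j := c (idx j).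
pose s (j : 'I_(N * k)) : R := (sS n (wi n k j))%:R / n%:R.
pose t (j : 'I_(N * k)) : R := (sT n (wi n k j))%:R / n%:R.
pose phiL' j := phiL (Psi j) + s j * (phiU (Psi j) - phiL (Psi j)).
pose phiU' j := phiL (Psi j) + t j * (phiU (Psi j) - phiL (Psi j)).
have hst j : 0 <= s j /\ s j < t j /\ t j <= 1.
  exact: (natdiv_bounds R (sS_lt_sT n _) (sT_le n0 _) n0).
have ha j : phiL (Psi j) <= phiL' j /\ phiL' j < phiU' j /\ phiU' j <= phiU (Psi j).
  have [h1 [h2 h3]] := hst j; exact: lift_bounds.
pose emb (g : T) : 'I_(N * k) := widen_ord (leq_pmull k (ltn_trans (MM0 n0) hN)) (cinv g).
have idx_emb g : idx (emb g) = cinv g by apply: val_inj; rewrite /= modn_small.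
have Psi_emb g : Psi (emb g) = g by rewrite /Psi idx_emb Kc.
have w_emb g : wi n k (emb g) = 0%N by rewrite /wi /= divn_small // min0n.
have [sS0' sT0'] := sS0 n0.
have nR : 0 < n%:R :> R by rewrite ltr0n.
exists 'I_(N * k), e', Psi, phiL', phiU'.
split; last by rewrite card_ord -(bij_eq_card (Bijective cK Kc)) card_ord.
split.
  exists (N * k)%N, id; split=> //; split=> //; by exists id.
split.
  by move=> g; exists (emb g); exact: Psi_emb.
split.
  move=> x y /= /eqP hy; rewrite /Psi he /= hy; apply/eqP.
  by rewrite modn_dvdm ?dvdn_mull // -[x.+1]addn1 -[(x %% k).+1]addn1 modnDml.
split.
  move=> j; have [h1 [h2 h3]] := ha j; move: (hL (Psi j)) (hU (Psi j)).
  by move=> /andP[? ?] /andP[? ?]; apply/andP; split; lra.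
split.
  move=> j; have [h1 [h2 h3]] := ha j; move: (hL (Psi j)) (hU (Psi j)).
  by move=> /andP[? ?] /andP[? ?]; apply/andP; split; lra.
split; first exact: ha.
split.
  move=> g; exists (emb g); split; first exact: Psi_emb.
  rewrite /phiL' /phiU' /s /t w_emb sS0' sT0' Psi_emb divff ?gt_eqF // mul1r.
  by split; [rewrite mul0r mul0r addr0 | rewrite addrC subrK].
split.
  move=> g a b h1 h2 h3.
  have dp : 0 < phiU g - phiL g by rewrite subr_gt0.
  have d1 : phiU g - phiL g <= 1.
    by move: (hL g) (hU g) => /andP[? ?] /andP[? ?]; lra.
  set L := phiL g in h1 dp d1 *; set U := phiU g in h3 dp d1 *.
  set d := U - L in dp d1 *.
  set a' := (a - L) / d; set b' := (b - L) / d.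
  have ea : a - L = a' * d by rewrite /a' divfK ?gt_eqF.
  have eb : b - L = b' * d by rewrite /b' divfK ?gt_eqF.
  have ha00 : 0 <= a' by apply: divr_ge0; lra.
  have ha0 : 0 <= a' * n%:R by apply: mulr_ge0; [lra | exact: ler0n].
  have hab : a' < b' by rewrite /a' /b' ltr_pM2r ?invr_gt0 //; lra.
  have hb1 : b' <= 1 by rewrite /b' ler_pdivrMr // mul1r; rewrite /d; lra.
  have hb0 : 0 <= b' * n%:R by apply: mulr_ge0; [lra | exact: ler0n].
  set I := Num.truncn (a' * n%:R); set J := Num.truncn (b' * n%:R).
  have /andP[hI1 hI2] := truncn_itv ha0; have /andP[hJ1 hJ2] := truncn_itv hb0.
  rewrite -/I in hI1 hI2; rewrite -/J in hJ1 hJ2.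
  have hIn : (I < n)%N.
    rewrite -(ltr_nat R); apply: le_lt_trans hI1 _; rewrite -[X in _ < X]mul1r ltr_pM2r //; lra.
  have hJn : (J <= n)%N.
    rewrite -(ler_nat R); apply: le_trans hJ1 _; rewrite -[X in _ <= X]mul1r ler_pM2r //.
  have [r [hr [hsr htr]]] := dense n0 hIn hJn.
  have hj : (r * k + cinv g < N * k)%N.
    exact: (idx_lt (ltn_trans hr hN) (ltn_ord _)).
  pose j : 'I_(N * k) := Ordinal hj.
  have idxj : idx j = cinv g.
    by apply: val_inj; rewrite /= modnMDl modn_small.
  have wj : wi n k j = r.
    by rewrite /wi /= divnMDl // divn_small // addn0; apply/minn_idPl; apply: ltnW.
  exists j; split; first by rewrite /Psi idxj Kc.
  have Pj : Psi j = g by rewrite /Psi idxj Kc.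
  rewrite /phiL' /phiU' /s /t Pj -/L -/U -/d wj hsr htr.
  split.
    have -> : a - (L + I%:R / n%:R * d) = d / n%:R * (a' * n%:R - I%:R).
      rewrite -[a](subrK L) ea; field; rewrite gt_eqF //.
    apply: fin_bound => //; rewrite ler_norml; apply/andP; split; lra.
  have -> : b - (L + (maxn I.+1 J)%:R / n%:R * d) = d / n%:R * (b' * n%:R - (maxn I.+1 J)%:R).
    rewrite -[b](subrK L) eb; field; rewrite gt_eqF //.
  apply: fin_bound => //; rewrite ler_norml.
  have hba : a' * n%:R < b' * n%:R by rewrite ltr_pM2r.
  rewrite /maxn; case: ltnP => hIJ.
    by apply/andP; split; lra.
  move: hIJ; rewrite -(ler_nat R) => hIJ.
  move: hI2 hJ2; rewrite -!natr1 => hI2 hJ2.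
  apply/andP; split; lra.
move=> x y /= /eqP hy0.
have hy : nat_of_ord y = (x.+1 %% (N * k))%N := hy0.
have [w1 w2 w3 w4] := wstep n0 k0 hN (ltn_ord x).
have hs1 : `|s x - s y| < eps by rewrite /s hy; exact: close_nat.
have hs2 : `|s y - s x| < eps by rewrite /s hy; exact: close_nat.
have ht1 : `|t x - t y| < eps by rewrite /t hy; exact: close_nat.
have ht2 : `|t y - t x| < eps by rewrite /t hy; exact: close_nat.
have [_ [sx _]] := hst x; have [_ [sy _]] := hst y.
have dx : phiU (Psi x) - phiL (Psi x) <= 1.
  by move: (hL (Psi x)) (hU (Psi x)) => /andP[? ?] /andP[? ?]; lra.
have dy : phiU (Psi y) - phiL (Psi y) <= 1.
  by move: (hL (Psi y)) (hU (Psi y)) => /andP[? ?] /andP[? ?]; lra.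
split; exact: aff_close.
Qed.

Theorem lemma8p2 (R : realType) (T : finType) (e : rel T)
  (phiL phiU : T -> R) (eps : R) :
  is_dcycle e -> in01 phiL -> in01 phiU ->
  (forall g, phiL g < phiU g) -> 0 < eps ->
  (exists (T' : finType) (e' : rel T') (Psi : T' -> T) (phiL' phiU' : T' -> R),
      lift_props e phiL phiU eps e' Psi phiL' phiU') /\
  (exists m0 : nat, forall m : nat, (m0 <= m)%N ->
     exists (T' : finType) (e' : rel T') (Psi : T' -> T) (phiL' phiU' : T' -> R),
       lift_props e phiL phiU eps e' Psi phiL' phiU' /\ #|T'| = (m * #|T|)%N).
Proof.
case=> k [c [k0 [[cinv cK Kc] he]]] hL hU hLU heps.
set n := (Num.truncn (eps^-1)).+1.
have n0 : (0 < n)%N by [].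
have hn : n%:R^-1 < eps.
  have ei : 0 <= eps^-1 by rewrite invr_ge0 ltW.
  have /andP[_ h] := truncn_itv ei.
  by rewrite invf_plt ?posrE ?ltr0n.
split.
  have [T' [e' [Psi [L' [U' [hp _]]]]]] :=
    construct k0 cK Kc he hL hU hLU n0 hn (ltnSn (MM n)).
  by exists T', e', Psi, L', U'.
exists (MM n).+1 => m hm.
exact: (construct k0 cK Kc he hL hU hLU n0 hn hm).
Qed.
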